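(* For every nonempty graph $G$, \[\hat r(\nu(G)K_2,G)\le \hat r(G,G),\qquad\text{and consequently}\qquad \hat r_\infty(G)\le \frac{\hat r(G,G)}{\nu(G)\,|E(G)|}.\]
   Context: All graphs are finite and simple; a graph is nonempty if it has at least one edge. $\nu(G)$ is the maximum size of a matching in $G$; $tK_2$ is a matching with $t$ edges. For graphs $F,G,H$, $F\to(G,H)$ means every red--blue coloring of $E(F)$ contains a red copy of $G$ or a blue copy of $H$, and $\hat r(G,H)=\min\{|E(F)|:F\to(G,H)\}$. For a nonempty graph $G$, $\hat r_\infty(G)=\lim_{t\to\infty}\frac{\hat r(tK_2,G)}{t\,|E(G)|}$ (this limit exists). *)

(* Defs.v *)
From Stdlib Require Import Reals.
From mathcomp Require Import all_boot.
From mathcomp Require Import boolp.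

Set Implicit Arguments.
Unset Strict Implicit.
Unset Printing Implicit Defensive.

Record graph := Graph {
  vert : finType;
  adj : rel vert;
  adj_sym : symmetric adj;
  adj_irr : irreflexive adj }.

Definition edges (G : graph) : {set {set vert G}} :=
  [set A : {set vert G} | [exists x, exists y, adj x y && (A == [set x; y])]].

Definition nedges (G : graph) : nat := #|edges G|.

Definition is_matching (G : graph) (M : {set {set vert G}}) : bool :=
  (M \subset edges G) &&
  [forall e1 in M, forall e2 in M, (e1 != e2) ==> [disjoint e1 & e2]].

Definition nu (G : graph) : nat :=
  \max_(M : {set {set vert G}} | is_matching M) #|M|.

Definition tK2_adj (t : nat) : rel ('I_t * bool) :=
  fun u v => (u.1 == v.1) && (u.2 != v.2).

Lemma tK2_adj_sym t : symmetric (@tK2_adj t).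
Proof.
move=> [i b] [j c]; rewrite /tK2_adj /=.
by rewrite (eq_sym i j) (eq_sym b c).
Qed.

Lemma tK2_adj_irr t : irreflexive (@tK2_adj t).
Proof. by move=> [i b]; rewrite /tK2_adj /= !eqxx. Qed.

Definition tK2 (t : nat) : graph := Graph (@tK2_adj_sym t) (@tK2_adj_irr t).

Definition has_copy (F H : graph) (col : {set vert F} -> bool) : Prop :=
  exists f : vert H -> vert F, injective f /\
    forall x y, adj x y -> adj (f x) (f y) /\ col [set f x; f y].

(* F -> (G, H): every red/blue colouring of E(F) (red = true) has a red G or a blue H. *)
Definition arrows (F G H : graph) : Prop :=
  forall c : {set vert F} -> bool,
    has_copy G (fun e => c e) \/ has_copy H (fun e => ~~ c e).

(* Size Ramsey number  r^(G,H) = min { |E(F)| : F -> (G,H) }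
   (the set is always nonempty; the default 0 is never used). *)
Definition srn_pred (G H : graph) : pred nat :=
  fun m => `[< exists F : graph, arrows F G H /\ nedges F = m >].

Definition srn (G H : graph) : nat :=
  match pselect (exists m, srn_pred G H m) with
  | left h => ex_minn h
  | right _ => 0
  end.

(* The sequence  t |-> r^(tK_2, G) / (t |E(G)|)  whose limit is r^_oo(G). *)
Definition rinf_seq (G : graph) (t : nat) : R :=
  Rdiv (INR (srn (tK2 t) G)) (Rmult (INR t) (INR (nedges G))).

(* Main.v *)
Require Import Defs.
From Stdlib Require Import Reals.
From mathcomp Require Import all_boot.
From mathcomp Require Import boolp zify.
From Stdlib Require Import Lra.

Set Implicit Arguments.
Unset Strict Implicit.
Unset Printing Implicit Defensive.

Section Ramsey.
Variables (V : finType) (col : V -> V -> bool).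
Hypothesis col_sym : forall x y, col x y = col y x.

Definition cliq (b : bool) (S : {set V}) :=
  {in S &, forall x y, x != y -> col x y = b}.

Lemma ramsey_sets s : forall t (W : {set V}), 'C(s + t, s) <= #|W| ->
  exists2 S : {set V}, S \subset W &
    (s <= #|S| /\ cliq true S) \/ (t <= #|S| /\ cliq false S).
Proof.
elim: s => [|s IHs] t W hW.
  by exists set0; [exact: sub0set | left; split => // x y; rewrite inE].
elim: t W hW => [|t IHt] W hW.
  by exists set0; [exact: sub0set | right; split => // x y; rewrite inE].
have hpos : 0 < #|W|.
  apply: leq_trans hW; rewrite bin_gt0; exact: leq_addr.
case/card_gt0P: hpos => v vW.
set W' := W :\ v.
set R := W' :&: [set w | col v w].
set B := W' :\: [set w | col v w].
have hc : #|R| + #|B| = #|W'| by rewrite cardsID.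
have hW' : #|W| = #|W'| + 1 by rewrite (cardsD1 v W) vW addnC.
move: hW; rewrite addSn addnS binS => hW.
have [hR|hB] : 'C(s + t.+1, s) <= #|R| \/ 'C(s.+1 + t, s.+1) <= #|B|.
  rewrite addSn -addnS; move: hW; rewrite -addnS; lia.
- have [S SR [[h1 h2]|[h1 h2]]] := IHs t.+1 R hR.
  + exists (v |: S).
      rewrite subUset sub1set vW /=; apply: subset_trans SR _.
      by rewrite /R /W' subIset // subD1set.
    left; split.
      rewrite cardsU1.
      have -> : v \notin S.
        apply/negP => /(subsetP SR); rewrite !inE eqxx //.
      by rewrite add1n ltnS.
    have vR : forall y, y \in S -> col v y.
      by move=> y /(subsetP SR); rewrite !inE => /andP[_ ->].
    move=> x y; rewrite !inE => /orP[/eqP->|xS] /orP[/eqP->|yS]; rewrite ?eqxx //.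
    * by move=> _; exact: vR.
    * by move=> _; rewrite col_sym; exact: vR.
    * exact: h2.
  + exists S => //; last by right.
    by apply: subset_trans SR _; rewrite /R /W' subIset // subD1set.
- have [S SB [[h1 h2]|[h1 h2]]] := IHt B hB.
  + exists S => //; last by left.
    by apply: subset_trans SB _; rewrite /B /W' subDset subsetU // subD1set orbT.
  + exists (v |: S).
      rewrite subUset sub1set vW /=; apply: subset_trans SB _.
      by rewrite /B /W' subDset subsetU // subD1set orbT.
    right; split.
      rewrite cardsU1.
      have -> : v \notin S.
        by apply/negP => /(subsetP SB); rewrite !inE eqxx /= andbF.
      by [] .
    have vB : forall y, y \in S -> col v y = false.
      by move=> y /(subsetP SB); rewrite !inE => /andP[/negbTE -> _].
    move=> x y; rewrite !inE => /orP[/eqP->|xS] /orP[/eqP->|yS]; rewrite ?eqxx //.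
    * by move=> _; exact: vB.
    * by move=> _; rewrite col_sym; exact: vB.
    * exact: h2.
Qed.
End Ramsey.
Definition Kadj (N : nat) : rel 'I_N := fun x y => x != y.
Lemma Kadj_sym N : symmetric (@Kadj N).
Proof. by move=> x y; rewrite /Kadj eq_sym. Qed.
Lemma Kadj_irr N : irreflexive (@Kadj N).
Proof. by move=> x; rewrite /Kadj eqxx. Qed.
Definition Kn (N : nat) : graph := Graph (@Kadj_sym N) (@Kadj_irr N).

Lemma adj_neq (G : graph) (x y : vert G) : adj x y -> x != y.
Proof. by apply: contraTneq => ->; rewrite adj_irr. Qed.

Lemma exists_arrow (G : graph) : exists F, arrows F G G.
Proof.
pose n := #|vert G|.
pose N := 'C(n + n, n).
exists (Kn N) => c.
pose col := fun x y : 'I_N => c [set x; y].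
have csym : forall x y, col x y = col y x by move=> x y; rewrite /col setUC.
have hW : 'C(n + n, n) <= #|[set: 'I_N]| by rewrite cardsT card_ord.
have [S _ HS] := @ramsey_sets _ col csym n n [set: 'I_N] hW.
have mk : forall b, n <= #|S| -> cliq col b S ->
   exists f : vert G -> 'I_N, injective f /\
    forall x y, adj x y -> f x != f y /\ c [set f x; f y] = b.
  move=> b hn hc.
  pose f := fun x : vert G => enum_val (A := mem S) (widen_ord hn (enum_rank x)).
  have finj : injective f.
    move=> x y /enum_val_inj /(congr1 val) /= /val_inj; exact: enum_rank_inj.
  exists f; split => // x y /adj_neq nxy.
  have fn : f x != f y by apply: contra nxy => /eqP /finj ->.
  split => //; apply: hc => //; exact: enum_valP.
case: HS => [[h1 h2]|[h1 h2]].
  left; have [f [fi fp]] := mk true h1 h2; exists f; split => // x y /fp [h3 h4]; split => //; by rewrite h4.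
right; have [f [fi fp]] := mk false h1 h2; exists f; split => // x y /fp [h3 h4]; split => //; by rewrite h4.
Qed.

Lemma srn_spec G H : (exists F, arrows F G H) ->
  exists F, arrows F G H /\ nedges F = srn G H.
Proof.
move=> [F0 h0]; rewrite /srn; case: pselect => [h|hn].
  by case: ex_minnP => m /asboolP [F [hF hm]] _; exists F.
by exfalso; apply: hn; exists (nedges F0); apply/asboolP; exists F0.
Qed.

Lemma srn_le G H F : arrows F G H -> srn G H <= nedges F.
Proof.
move=> hF; rewrite /srn; case: pselect => [h|hn].
  by case: ex_minnP => m _ hmin; apply: hmin; apply/asboolP; exists F.
by [].
Qed.

Lemma max_matching G : exists M : {set {set vert G}}, is_matching M /\ #|M| = nu G.
Proof.
have h0 : 0 < #|[pred M : {set {set vert G}} | @is_matching G M]|.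
  apply/card_gt0P; exists set0; rewrite inE /is_matching sub0set /=.
  by apply/forall_inP => e; rewrite inE.
have [M HM Heq] := eq_bigmax_cond (fun M : {set {set vert G}} => #|M|) h0.
exists M; split; first by move: HM; rewrite inE.
by rewrite /nu -Heq; apply: eq_bigl => i; rewrite inE.
Qed.

Lemma matching_emb G : exists g : 'I_(nu G) * bool -> vert G,
  injective g /\ forall r b, adj (g (r, b)) (g (r, ~~ b)).
Proof.
have [M [/andP [MsubE Mdisj] hM]] := max_matching G.
pose eM := fun r : 'I_(nu G) => enum_val (A := mem M) (cast_ord (esym hM) r).
have eMin : forall r, eM r \in M by move=> r; exact: enum_valP.
have eMinj : injective eM by move=> r r' /enum_val_inj /cast_ord_inj.
have hex : forall r, exists p : vert G * vert G, adj p.1 p.2 && (eM r == [set p.1; p.2]).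
  move=> r; have := subsetP MsubE _ (eMin r); rewrite inE.
  by case/existsP => x /existsP [y hxy]; exists (x, y).
have [p hp] := choice hex.
pose g := fun rb : 'I_(nu G) * bool => if rb.2 then (p rb.1).1 else (p rb.1).2.
have gin : forall r b, g (r, b) \in eM r.
  move=> r b; have /andP [_ /eqP ->] := hp r.
  by rewrite /g /=; case: b; rewrite !inE eqxx ?orbT.
have gadj : forall r b, adj (g (r, b)) (g (r, ~~ b)).
  move=> r b; have /andP [h _] := hp r.
  by rewrite /g /=; case: b => //=; rewrite adj_sym.
exists g; split => //.
move=> [r b] [r' b'] e.
case: (eqVneq r r') => [err'|nrr'].
  subst r'; case: (eqVneq b b') => [-> //|nbb'].
  have : b' = ~~ b by case: b b' nbb' e {gin gadj} => [] [].
  move=> eb'; move: e; rewrite eb' => e.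
  by have := gadj r b; rewrite -e adj_irr.
exfalso.
have hne : eM r != eM r' by apply: contra nrr' => /eqP /eMinj ->.
have := (forall_inP Mdisj) _ (eMin r) => /forall_inP /(_ _ (eMin r')).
rewrite hne /= => hd.
by have := disjointFr hd (gin r b); rewrite e gin.
Qed.

Section KF.
Variables (k : nat) (F : graph).
Definition kadj : rel ('I_k * vert F) := fun p q => (p.1 == q.1) && adj p.2 q.2.
Lemma kadj_sym : symmetric kadj.
Proof. by move=> [i u] [j v]; rewrite /kadj /= eq_sym adj_sym. Qed.
Lemma kadj_irr : irreflexive kadj.
Proof. by move=> [i u]; rewrite /kadj /= adj_irr andbF. Qed.
Definition kF : graph := Graph kadj_sym kadj_irr.

Lemma nedges_kF : nedges kF <= k * nedges F.
Proof.
pose gg := fun p : 'I_k * {set vert F} => [set (p.1, x) | x in p.2].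
have sub : edges kF \subset [set gg p | p in setX [set: 'I_k] (edges F)].
  apply/subsetP => A; rewrite inE => /existsP [[i u] /existsP [[j v]]].
  case/andP => /andP [/= /eqP eij huv] /eqP ->; subst j.
  apply/imsetP; exists (i, [set u; v]).
    rewrite !inE /=; apply/existsP; exists u; apply/existsP; exists v.
    by rewrite huv eqxx.
  by rewrite /gg /= imsetU1 imset_set1.
rewrite /nedges; apply: leq_trans (subset_leq_card sub) _.
by apply: leq_trans (leq_imset_card _ _) _; rewrite cardsX cardsT card_ord.
Qed.
End KF.

Lemma arrow_kF F G k : arrows F G G -> arrows (kF k F) (tK2 (k * nu G)) G.
Proof.
move=> hF c.
pose cq := fun (q : 'I_k) (e : {set vert F}) => c [set (q, x) | x in e].
have cqE : forall q a b, cq q [set a; b] = c [set (q, a); (q, b)].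
  by move=> q a b; rewrite /cq imsetU1 imset_set1.
case: (pselect (exists q, has_copy G (fun e => ~~ cq q e))) => [[q [f [fi fp]]]|hno].
  right; exists (fun x => (q, f x)); split.
    by move=> x y [] /fi.
  move=> x y /fp [h1 h2]; split; first by rewrite /= /kadj /= eqxx h1.
  by rewrite -cqE.
have hred : forall q, exists f : vert G -> vert F, injective f /\
    forall x y, adj x y -> adj (f x) (f y) /\ cq q [set f x; f y].
  move=> q; case: (hF (cq q)) => // hb; exfalso; apply: hno; by exists q.
have [fq hfq] := choice hred.
have [g [gi gadj]] := matching_emb G.
left.
have hc : #|{: 'I_k * 'I_(nu G)}| = k * nu G by rewrite card_prod !card_ord.
pose h := fun i : 'I_(k * nu G) => enum_val (A := {: 'I_k * 'I_(nu G)}) (cast_ord (esym hc) i).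
have hi : injective h by move=> i j /enum_val_inj /cast_ord_inj.
exists (fun ib : 'I_(k * nu G) * bool => ((h ib.1).1, fq (h ib.1).1 (g ((h ib.1).2, ib.2)))).
split.
  move=> [i b] [j b'] /= [e1 e2].
  move: e2; rewrite -e1 => /(proj1 (hfq _)) /gi [e3 e4].
  have : h i = h j by rewrite [h i]surjective_pairing [h j]surjective_pairing e1 e3.
  by move/hi => ->; rewrite e4.
move=> [i b] [j b'] /andP [/= /eqP eij nbb']; subst j.
have -> : b' = ~~ b by case: b b' nbb' => [] [].
have [h1 h2] := proj2 (hfq (h i).1) _ _ (gadj (h i).2 b).
split; first by rewrite /= /kadj /= eqxx h1.
by rewrite -cqE.
Qed.

Lemma srn_mult G k : srn (tK2 (k * nu G)) G <= k * srn G G.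
Proof.
have [F [hF hn]] := srn_spec (exists_arrow G).

apply: leq_trans (srn_le (@arrow_kF F G k hF)) _.
by rewrite -hn; exact: nedges_kF.
Qed.

Lemma nu_gt0 G : 0 < nedges G -> 0 < nu G.
Proof.
move/card_gt0P => [A hA].
have hm : is_matching [set A].
  rewrite /is_matching sub1set hA /=.
  by apply/forall_inP => e1; rewrite inE => /eqP ->; apply/forall_inP => e2;
     rewrite inE => /eqP ->; rewrite eqxx.
by have := @leq_bigmax_cond _ (@is_matching G) (fun M : {set {set vert G}} => #|M|) _ hm; rewrite cards1.
Qed.

Theorem proposition4p1 (G : graph) :
  0 < nedges G ->
  srn (tK2 (nu G)) G <= srn G G /\
  (forall L : R, Un_cv (rinf_seq G) L ->
     Rle L (Rdiv (INR (srn G G)) (Rmult (INR (nu G)) (INR (nedges G))))).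
Proof.
Local Open Scope R_scope.
move=> hE; have hnu := nu_gt0 hE; split.
  by have := srn_mult G 1; rewrite !mul1n.
move=> L hL.
apply: Rnot_lt_le => hlt.
have hpos : (L - INR (srn G G) / (INR (nu G) * INR (nedges G)) > 0).
  by apply: Rgt_minus.
have [N hN] := hL _ hpos.
have hNn : (N <= N.+1 * nu G)%N.
  by apply: leq_trans (leq_pmulr _ hnu); exact: leqnSn.
have hd := hN _ (leP hNn).
have h1 := srn_mult G N.+1.
have e1 : INR (N.+1 * nu G) = (INR N.+1 * INR (nu G)) := mult_INR _ _.
have e2 : INR (N.+1 * srn G G) = (INR N.+1 * INR (srn G G)) := mult_INR _ _.
have hK : (0 < INR N.+1) by apply: lt_0_INR; apply/ltP.
have hV : (0 < INR (nu G)) by apply: lt_0_INR; apply/ltP.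
have hEE : (0 < INR (nedges G)) by apply: lt_0_INR; apply/ltP.
have ha : (INR (srn (tK2 (N.+1 * nu G)) G) <= INR N.+1 * INR (srn G G)).
  by rewrite -e2; apply: le_INR; apply/leP.
have hu : (rinf_seq G (N.+1 * nu G) <=
   INR (srn G G) / (INR (nu G) * INR (nedges G))).
  rewrite /rinf_seq e1.
  apply: Rle_trans (_ : _ <= (INR N.+1 * INR (srn G G)) / (INR N.+1 * INR (nu G) * INR (nedges G))) _.
    apply: Rmult_le_compat_r => //; apply: Rlt_le; apply: Rinv_0_lt_compat.
    by apply: Rmult_lt_0_compat => //; apply: Rmult_lt_0_compat.
  apply: Req_le; field.
  by split; [|split]; apply: Rgt_not_eq.
move: hd; rewrite /R_dist => hd.
have := Rabs_def2 _ _ hd.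
move: hu; lra.
Qed.
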